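(* Let $T>0$, $\tau>0$ and $x\in L^\infty(-\tau,T)$. For $t\in[0,T]$ let $x_t(s)=x(t-s)$, $s\in[0,\tau]$, and for $k>0$ let $\mathrm{LIE}_k(x_t)=\frac1k\log\big(\int_{t-\tau}^t\exp(k\,x(s))\,\mathrm{d}s\big)$. Then for every $p\in[1,\infty)$, \[ \int_0^T\big|\operatorname*{ess\,sup}x_t-\mathrm{LIE}_k(x_t)\big|^p\,\mathrm{d}t\to0\qquad\text{as }k\to\infty, \] where $\operatorname*{ess\,sup}x_t$ is the essential supremum of $x_t$ over $[0,\tau]$. *)

(* Defs.v *)
From HB Require Import structures.
From mathcomp Require Import all_boot all_order all_algebra.
From mathcomp Require Import all_classical all_reals all_analysis.
Set Implicit Arguments. Unset Strict Implicit. Unset Printing Implicit Defensive.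
Import Order.TTheory GRing.Theory Num.Theory.
Import numFieldNormedType.Exports.
Local Open Scope classical_set_scope.
Local Open Scope ring_scope.

Definition ess_sup_on {R : realType} (D : set R) (f : R -> R) : \bar R :=
  ereal_inf [set y : \bar R |
    {ae (@lebesgue_measure R), forall s, D s -> ((f s)%:E <= y)%E}].

Definition seg {R : realType} (x : R -> R) (t : R) : R -> R := fun s => x (t - s).

Definition LIE {R : realType} (k tau : R) (x : R -> R) (t : R) : R :=
  k^-1 * ln (fine (\int[@lebesgue_measure R]_(s in `[t - tau, t]%classic)
                      (expR (k * x s))%:E)).

(* Main.v *)
Require Import Defs.
From HB Require Import structures.
From mathcomp Require Import all_boot all_order all_algebra.
From mathcomp Require Import all_classical all_reals all_analysis.
From mathcomp Require Import measurable_realfun.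
From mathcomp Require Import ring lra.
Import Order.TTheory GRing.Theory Num.Theory.
Import numFieldNormedType.Exports.
Local Open Scope classical_set_scope.
Local Open Scope ring_scope.
Lemma leb_reflE (R : realType) (t : R) (A : set R) : measurable A ->
  (@lebesgue_measure R) ((fun u => t - u) @^-1` A) = lebesgue_measure A.
Proof.
move=> mA.
pose phi : measurableTypeR R -> measurableTypeR R := fun u : R => t - u.
have mphi : measurable_fun setT phi by apply: measurable_funB.
have := @lebesgue_measure_unique R (measure_function_pushforward__canonical__measure_function_Measure (@lebesgue_measure R) mphi).
move=> H; rewrite (H _ A mA) //.
move=> X /ocitvP [->|[[a b] /= ab ->]].
  by rewrite /= /pushforward preimage_set0.
rewrite /= /pushforward.
have -> : phi @^-1` `]a, b]%classic = `[t - b, t - a[%classic.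
  apply/seteqP; split => u /=; rewrite !in_itv /=.
    by move=> /andP[h1 h2]; apply/andP; split; rewrite /phi in h1 h2; lra.
  by move=> /andP[h1 h2]; apply/andP; split; rewrite /phi; lra.
rewrite !lebesgue_measure_itv /= !lte_fin ab ltrD2l ltrN2 ab.
by rewrite -!EFinD; congr (_%:E); lra.
Qed.

Lemma ae_refl (R : realType) (t : R) (P : R -> Prop) :
  {ae (@lebesgue_measure R), forall u, P u} ->
  {ae (@lebesgue_measure R), forall s, P (t - s)}.
Proof.
move=> [A [mA A0 PA]].
have mphi : measurable_fun setT (fun u : R => t - u) by apply: measurable_funB.
exists ((fun u => t - u) @^-1` A); split.
- by rewrite -[X in measurable X]setTI; exact: mphi.
- by rewrite leb_reflE.
- by move=> s /= nP; apply: PA.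
Qed.

Arguments ae_refl {R} t {P}.

Lemma ae_cc (R : realType) (a b : R) (Q : R -> Prop) :
  {ae (@lebesgue_measure R), forall s, `]a, b[%classic s -> Q s} ->
  {ae (@lebesgue_measure R), forall s, `[a, b]%classic s -> Q s}.
Proof.
move=> h.
have h1 (c : R) : {ae (@lebesgue_measure R), forall s, s <> c}.
  exists [set c]; split => //; first by rewrite lebesgue_measure_set1.
  by move=> s /= /contrapT.
move: (h1 a) (h1 b) h; apply: (@filterS3 _ _ (ae_filter_ringOfSetsType lebesgue_measure)) => s sa sb hs /=.
rewrite in_itv /= => /andP[h2 h3]; apply: hs.
rewrite /= in_itv /=; apply/andP; split; rewrite lt_neqAle; apply/andP; split => //.
- by apply/eqP => e; apply: sa.
- by apply/eqP => e; apply: sb.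
Qed.

Arguments ae_cc {R} a b {Q}.

Lemma powR_small (R : realType) (a p : R) : 1 <= p -> 0 <= a <= 1 -> a `^ p <= a.
Proof.
move=> p1 /andP[a0 a1]; have [->|an0] := eqVneq a 0.
  by rewrite powR0 // gt_eqF // (lt_le_trans ltr01 p1).
by apply: ge1r_powR => //; rewrite a1 andbT lt_neqAle eq_sym an0.
Qed.

Lemma lnb_le (R : realType) (k y c a : R) : 0 < k -> 0 < c ->
  expR (k * y) * c <= a -> y + k^-1 * ln c <= k^-1 * ln a.
Proof.
move=> k0 c0 h.
have p0 : 0 < expR (k * y) * c by rewrite mulr_gt0 // expR_gt0.
have a0 : 0 < a by apply: lt_le_trans h.
have : ln (expR (k * y) * c) <= ln a by rewrite ler_ln // posrE.
rewrite lnM ?posrE ?expR_gt0 // expRK => h2.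
have : k^-1 * (k * y + ln c) <= k^-1 * ln a.
  by apply: ler_wpM2l => //; rewrite invr_ge0 ltW.
by rewrite mulrDr mulrA mulVf ?mul1r // gt_eqF.
Qed.

Lemma lnb_ge (R : realType) (k y c a : R) : 0 < k -> 0 < c -> 0 < a ->
  a <= expR (k * y) * c -> k^-1 * ln a <= y + k^-1 * ln c.
Proof.
move=> k0 c0 a0 h.
have p0 : 0 < expR (k * y) * c by rewrite mulr_gt0 // expR_gt0.
have : ln a <= ln (expR (k * y) * c) by rewrite ler_ln // posrE.
rewrite lnM ?posrE ?expR_gt0 // expRK => h2.
have : k^-1 * ln a <= k^-1 * (k * y + ln c).
  by apply: ler_wpM2l => //; rewrite invr_ge0 ltW.
by rewrite mulrDr mulrA mulVf ?mul1r // gt_eqF.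
Qed.

Lemma cvg_powR_abs (R : realType) (p : R) (r : R^nat) (l : R) : 1 <= p ->
  r n @[n --> \oo] --> l -> ((`|l - r n|) `^ p)%:E @[n --> \oo] --> 0%E.
Proof.
move=> p1 hr; apply: cvg_EFin; first exact: nearW.
apply/cvgrPdist_lt => d d0.
have md0 : 0 < Num.min d 1 by rewrite lt_min d0 ltr01.
move/cvgrPdist_lt: hr => /(_ _ md0); apply: filterS => n hn /=.
have a0 : 0 <= `|l - r n| by [].
have a1 : `|l - r n| <= 1 by apply: ltW; apply: lt_le_trans hn _; rewrite ge_min lexx orbT.
have ad : `|l - r n| < d by apply: lt_le_trans hn _; rewrite ge_min lexx.
rewrite sub0r normrN ger0_norm ?powR_ge0 //.
by apply: le_lt_trans ad; apply: powR_small => //; rewrite a0 a1.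
Qed.

Section main.
Variables (R : realType) (T tau : R) (x : R -> R).
Hypothesis hT : 0 < T.
Hypothesis htau : 0 < tau.
Hypothesis xmeas : measurable_fun `]- tau, T[%classic x.
Variable M : R.
Hypothesis xbnd : {ae (@lebesgue_measure R), forall s, `]- tau, T[%classic s -> `|x s| <= M}.

Local Notation mu := (@lebesgue_measure R).

#[local] Instance aeF : Filter (nbhs (almost_everywhere mu)) := ae_filter_ringOfSetsType mu.

Let xmeas_cc : measurable_fun `[- tau, T]%classic x.
Proof. exact: measurable_fun_itv_cc xmeas. Qed.

Let S (t : R) := [set y : \bar R | {ae mu, forall s, `[0%R, tau]%classic s -> ((seg x t s)%:E <= y)%E}].

Let bnd_s {t} : 0 <= t <= T -> {ae mu, forall s, `[0%R, tau]%classic s -> `|x (t - s)| <= M}.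
Proof.
move=> /andP[t0 tT]; apply: ae_cc.
move: (ae_refl t xbnd); apply: filterS => s h.
rewrite /= in_itv /= => /andP[s0 st]; apply: h.
by rewrite /= in_itv /=; apply/andP; split; lra.
Qed.

Let S_M {t} : 0 <= t <= T -> S t M%:E.
Proof.
move=> t01; move: (bnd_s t01); apply: filterS => s h hs.
by rewrite lee_fin /seg; apply: ler_normlW; apply: h.
Qed.

Let mu_cc (a b : R) : a <= b -> mu `[a, b]%classic = (b - a)%:E.
Proof.
move=> ab; rewrite lebesgue_measure_itv /= lte_fin.
have [ab'|] := ltP a b; first by rewrite -EFinD.
move=> ba; have -> : b = a by apply/eqP; rewrite eq_le ab ba.
by rewrite subrr.
Qed.

Let S_lb t y : 0 <= t <= T -> S t y -> ((- M)%:E <= y)%E.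
Proof.
move=> t01 Sy; rewrite leNgt; apply/negP => yM.
have : {ae mu, forall s, `[0%R, tau]%classic s -> False}.
  move: Sy (bnd_s t01); apply: filterS2 => s h1 h2 hs.
  have h3 := h1 hs; have h5 := h2 hs; rewrite ler_norml in h5.
  move/andP: h5 => [h5 _].
  have := le_lt_trans h3 yM; rewrite /seg lte_fin => h6.
  by have := lt_le_trans h6 h5; rewrite ltxx.
move=> [N [mN N0 sub]].
have : (mu `[0%R, tau]%classic <= mu N)%E.
  apply: le_measure; rewrite ?inE //.
  by move=> s hs; apply: sub => /=; apply.
by rewrite N0 mu_cc ?subr0 ?lee_fin ?(ltW htau)// leNgt htau.
Qed.

Let E t := ereal_inf (S t).
Let e t := fine (E t).

Let E_bnd {t} : 0 <= t <= T -> ((- M)%:E <= E t <= M%:E)%E.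
Proof.
move=> t01; apply/andP; split.
  by apply/ereal_infP => y; apply: S_lb.
by apply: ereal_inf_lbound; apply: S_M.
Qed.

Let E_fin {t} : 0 <= t <= T -> E t \is a fin_num.
Proof.
move=> t01; have /andP[h1 h2] := E_bnd t01.
by rewrite fin_numE; apply/andP; split; apply/eqP => h; rewrite h in h1 h2.
Qed.

Let eE {t} : 0 <= t <= T -> (e t)%:E = E t.
Proof. by move=> t01; rewrite fineK // E_fin. Qed.

Let e_bnd {t} : 0 <= t <= T -> - M <= e t <= M.
Proof. by move=> t01; rewrite -!lee_fin eE //; apply: E_bnd. Qed.

Let E_attain {t} : 0 <= t <= T ->
  {ae mu, forall s, `[0%R, tau]%classic s -> x (t - s) <= e t}.
Proof.
move=> t01.
have hy n : exists y, S t y /\ (y < E t + (n.+1%:R^-1)%:E)%E.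
  have [y Sy yl] := @lb_ereal_inf_adherent R (S t) (n.+1%:R^-1) ltac:(by []) (E_fin t01).
  by exists y.
have /choice [yf hyf] := hy.
have : {ae mu, forall s, forall n : nat, `[0%R, tau]%classic s -> ((seg x t s)%:E <= yf n)%E}.
  by apply: ae_foralln => n; have [] := hyf n.
apply: filterS => s h hs; rewrite leNgt; apply/negP => lt.
have [k hk] := ltr_add_invr lt.
have h1 := h k hs; have [_ h2] := hyf k.
have := le_lt_trans h1 h2; rewrite -eE // -EFinD lte_fin /seg => h3.
by have := lt_trans h3 hk; rewrite ltxx.
Qed.

Let W t := `[t - tau, t]%classic.

Let W_sub {t} : 0 <= t <= T -> W t `<=` `[- tau, T]%classic.
Proof.
move=> /andP[t0 tT] u; rewrite /W /= !in_itv /= => /andP[h1 h2].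
by apply/andP; split; lra.
Qed.

Let mW t : measurable (W t).
Proof. exact: measurable_itv. Qed.

Let mxW {t} : 0 <= t <= T -> measurable_fun (W t) x.
Proof. by move=> t01; apply: measurable_funS xmeas_cc => //; exact: W_sub. Qed.

Let up_u {t} : 0 <= t <= T -> {ae mu, forall u, W t u -> x u <= e t}.
Proof.
move=> t01; move: (ae_refl t (E_attain t01)); apply: filterS => u h hu.
have -> : u = t - (t - u) by ring.
apply: h; move: hu; rewrite /W /= !in_itv /= => /andP[h1 h2].
by apply/andP; split; lra.
Qed.

Let A t eps := W t `&` x @^-1` `]e t - eps, +oo[%classic.

Let mA {t} eps : 0 <= t <= T -> measurable (A t eps).
Proof. by move=> t01; apply: mxW => //; exact: measurable_itv. Qed.

Let A_pos {t} eps : 0 <= t <= T -> 0 < eps -> (0 < mu (A t eps))%E.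
Proof.
move=> t01 eps0; rewrite lt0e measure_ge0 andbT; apply/negP => /eqP A0.
have h1 : {ae mu, forall u, W t u -> x u <= e t - eps}.
  exists (A t eps); split => //; first exact: mA.
  move=> u /= hu; split.
    by apply: contrapT => hW; apply: hu => hW'; exfalso; apply: hW.
  rewrite /= in_itv /= andbT ltNge; apply/negP => hle.
  by apply: hu.
have h2 : S t (e t - eps)%:E.
  move: (ae_refl t h1); apply: filterS => s h hs.
  rewrite lee_fin /seg; apply: h; move: hs; rewrite /W /= !in_itv /= => /andP[hs1 hs2].
  by apply/andP; split; lra.
have := ereal_inf_lbound h2; rewrite -/(E t) -eE // lee_fin; lra.
Qed.

Let mu_oo (a b : R) : a <= b -> mu `]a, b[%classic = (b - a)%:E.
Proof.
move=> ab; rewrite lebesgue_measure_itv /= lte_fin.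
have [ab'|] := ltP a b; first by rewrite -EFinD.
move=> ba; have -> : b = a by apply/eqP; rewrite eq_le ab ba.
by rewrite subrr.
Qed.

Let mf {t} k : 0 <= t <= T -> measurable_fun (W t) (fun u => (expR (k * x u))%:E).
Proof.
move=> t01; apply/measurable_EFinP; apply: measurableT_comp => //.
by apply: measurable_funM => //; exact: mxW.
Qed.

Let J k t := (\int[mu]_(u in W t) (expR (k * x u))%:E)%E.

Let intW c t : (\int[mu]_(u in W t) (cst c%:E u) = (c * tau)%:E)%E.
Proof.
rewrite integral_cst; last exact: mW.
rewrite EFinM; congr (_ * _)%E.
have h : t - tau <= t. move: htau. lra.
rewrite [in RHS](_ : tau = t - (t - tau) :> R); last ring.
exact: mu_cc h.
Qed.

Let intO c t : (\int[mu]_(u in `](t - tau)%R, t[%classic) (cst c%:E u) = (c * tau)%:E)%E.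
Proof.
rewrite integral_cst; last exact: measurable_itv.
rewrite EFinM; congr (_ * _)%E.
have h : t - tau <= t by move: htau; lra.
rewrite [in RHS](_ : tau = t - (t - tau) :> R); last ring.
exact: mu_oo h.
Qed.

Let J_up {t} k : 0 <= t <= T -> 0 <= k -> (J k t <= (expR (k * e t) * tau)%:E)%E.
Proof.
move=> t01 k0; rewrite /J.
apply: (@le_trans _ _ (\int[mu]_(u in W t) (cst (expR (k * e t))%:E u))%E).
  apply: ae_ge0_le_integral => //; first exact: mW;
    try (by move=> u _; rewrite ?/cst lee_fin expR_ge0); try exact: mf.
  move: (up_u t01); apply: filterS => u h hu.
  by rewrite lee_fin ler_expR; apply: ler_wpM2l => //; apply: h.
by rewrite intW.
Qed.

Let J_lo {t} k : 0 <= t <= T -> 0 <= k -> ((expR (k * (- M)) * tau)%:E <= J k t)%E.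
Proof.
move=> t01 k0; rewrite /J.
have sOW : `]t - tau, t[%classic `<=` W t by apply: subset_itv_oo_cc.
apply: (@le_trans _ _ (\int[mu]_(u in `](t - tau)%R, t[%classic) (expR (k * x u))%:E)%E); last first.
  apply: ge0_subset_integral => //; first exact: measurable_itv;
    try (by move=> u _; rewrite ?/cst lee_fin expR_ge0); try exact: mf.
apply: (@le_trans _ _ (\int[mu]_(u in `](t - tau)%R, t[%classic) (cst (expR (k * (- M)))%:E u))%E).
  by rewrite intO.
apply: ae_ge0_le_integral => //.
- by move=> u _; rewrite ?/cst lee_fin expR_ge0.
- exact: (measurable_funS (mW t) sOW (mf k t01)).
move: xbnd; apply: filterS => u h hu.
rewrite lee_fin ler_expR; apply: ler_wpM2l => //.
have : `|x u| <= M.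
  apply: h; move: hu t01; rewrite /= !in_itv /= => /andP[h1 h2] /andP[h3 h4].
  by apply/andP; split; lra.
by rewrite ler_norml => /andP[].
Qed.

Let J_lo2 {t} k eps : 0 <= t <= T -> 0 <= k ->
  ((expR (k * (e t - eps)))%:E * mu (A t eps) <= J k t)%E.
Proof.
move=> t01 k0; rewrite /J.
apply: (@le_trans _ _ (\int[mu]_(u in A t eps) (expR (k * x u))%:E)%E); last first.
  apply: ge0_subset_integral => //.
  all: try exact: (mA eps t01).
  all: try exact: mW.
  all: try exact: (mf k t01).
  all: try exact: subIsetl.
  all: try (by move=> u _; rewrite ?/cst lee_fin expR_ge0).
apply: (@le_trans _ _ (\int[mu]_(u in A t eps) (cst (expR (k * (e t - eps)))%:E u))%E).
  by rewrite integral_cst //; exact: (mA eps t01).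
apply: ae_ge0_le_integral => //.
all: try exact: (mA eps t01).
all: try (by move=> u _; rewrite ?/cst lee_fin expR_ge0).
all: try exact: (measurable_funS (mW t) (@subIsetl _ _ _) (mf k t01)).
apply: aeW => u [hu1 hu2].
rewrite lee_fin ler_expR; apply: ler_wpM2l => //.
by move: hu2; rewrite /= in_itv /= andbT => /ltW.
Qed.

Let J_fin {t} k : 0 <= t <= T -> 0 <= k -> J k t \is a fin_num.
Proof.
move=> t01 k0; have h1 := J_lo k t01 k0; have h2 := J_up k t01 k0.
rewrite fin_numE; apply/andP; split; apply/eqP => h; rewrite h in h1 h2 => //.
Qed.

Let a_lo {t} k : 0 <= t <= T -> 0 <= k -> expR (k * (- M)) * tau <= fine (J k t).
Proof. by move=> t01 k0; rewrite -lee_fin fineK ?J_fin //; exact: J_lo. Qed.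

Let a_up {t} k : 0 <= t <= T -> 0 <= k -> fine (J k t) <= expR (k * e t) * tau.
Proof. by move=> t01 k0; rewrite -lee_fin fineK ?J_fin //; exact: J_up. Qed.

Let a_pos {t} k : 0 <= t <= T -> 0 <= k -> 0 < fine (J k t).
Proof.
move=> t01 k0; apply: lt_le_trans (a_lo k t01 k0).
by rewrite mulr_gt0 ?expR_gt0.
Qed.

Let muA_fin {t} eps : 0 <= t <= T -> mu (A t eps) \is a fin_num.
Proof.
move=> t01; rewrite ge0_fin_numE ?measure_ge0 //.
apply: (@le_lt_trans _ _ (mu (W t))).
  apply: le_measure; rewrite ?inE //=; [exact: (mA eps t01)|exact: mW|exact: subIsetl].
rewrite /W mu_cc ?ltry //; move: htau; lra.
Qed.

Let LIE_up {t} k : 0 <= t <= T -> 0 < k -> LIE k tau x t <= e t + k^-1 * ln tau.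
Proof.
move=> t01 k0; apply: lnb_ge => //; first exact: (a_pos k t01 (ltW k0)).
exact: (a_up k t01 (ltW k0)).
Qed.

Let LIE_lo {t} k : 0 <= t <= T -> 0 < k -> - M + k^-1 * ln tau <= LIE k tau x t.
Proof.
move=> t01 k0; apply: lnb_le => //.
exact: (a_lo k t01 (ltW k0)).
Qed.

Let LIE_lo2 {t} k eps : 0 <= t <= T -> 0 < k -> 0 < eps ->
  e t - eps + k^-1 * ln (fine (mu (A t eps))) <= LIE k tau x t.
Proof.
move=> t01 k0 eps0; apply: lnb_le => //.
  by rewrite -lte_fin fineK ?muA_fin //; exact: A_pos.
rewrite -lee_fin EFinM fineK ?muA_fin // fineK ?J_fin ?(ltW k0) //.
exact: (J_lo2 k eps t01 (ltW k0)).
Qed.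

Let cvg_pt {t} : 0 <= t <= T -> LIE k tau x t @[k --> +oo] --> e t.
Proof.
move=> t01; apply/cvgrPdist_lt => d d0.
pose eps := d / 2.
have eps0 : 0 < eps by rewrite /eps divr_gt0.
pose m := fine (mu (A t eps)).
have m0 : 0 < m by rewrite -lte_fin /m fineK ?muA_fin //; exact: A_pos.
pose c := `|ln m| + `|ln tau|.
near=> k.
have k0 : 0 < k by near: k; apply: nbhs_pinfty_gt; rewrite num_real.
have hk : c * k^-1 < eps.
  have : c / eps < k by near: k; apply: nbhs_pinfty_gt; rewrite num_real.
  by rewrite ltr_pdivrMr // ltr_pdivrMr // mulrC.
have h1 := LIE_up k t01 k0.
have h2 := LIE_lo2 k eps t01 k0 eps0.
rewrite -/m in h2.
have w0 : 0 < k^-1 by rewrite invr_gt0.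
have n1 : ln tau <= `|ln tau| by exact: ler_norm.
have n2 : - ln m <= `|ln m| by rewrite -normrN; exact: ler_norm.
have n3 : 0 <= `|ln m| by [].
have n4 : 0 <= `|ln tau| by [].
have b1 : k^-1 * ln tau <= c * k^-1 by rewrite /c; nra.
have b2 : - (k^-1 * ln m) <= c * k^-1 by rewrite /c; nra.
rewrite ltr_norml; apply/andP; split.
  move: h1 b1 hk; rewrite /eps; lra.
move: h2 b2 hk; rewrite /eps; lra.
Unshelve. all: by end_near.
Qed.

Let xp := x \_ `[- tau, T]%classic.

Let mxp : measurable_fun setT xp.
Proof. by apply/(measurable_restrictT _ _).1 => //; exact: measurable_itv. Qed.

Let G k (z : R * R) : \bar R :=
  ((\1_`[0%R, tau]%classic (z.1 - z.2) : R) * expR (k * xp z.2))%:E.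

Let mG k : measurable_fun setT (G k).
Proof.
apply/measurable_EFinP; apply: measurable_funM.
  apply: (measurableT_comp (measurable_indic _)); first exact: measurable_itv.
  by apply: measurable_funB; [exact: measurable_fst|exact: measurable_snd].
apply: measurableT_comp => //; apply: measurable_funM => //.
exact: (measurableT_comp mxp measurable_snd).
Qed.

Let G0 k z : (0 <= G k z)%E.
Proof. by rewrite lee_fin mulr_ge0 // expR_ge0. Qed.

Let JF {t} k : 0 <= t <= T -> J k t = fubini_F mu (G k) t.
Proof.
move=> t01; rewrite /J /fubini_F [LHS]integral_mkcond; apply: eq_integral => u _.
rewrite /G patchE /=; case: ifPn => uW.
  rewrite indicE mem_set ?mul1r; last first.
    move: uW; rewrite inE /W /= !in_itv /= => /andP[h1 h2].
    by apply/andP; split; lra.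
  by rewrite /xp patchE mem_set //; apply: (W_sub t01); move: uW; rewrite inE.
rewrite indicE memNset ?mul0r //.
move: uW; rewrite notin_setE /W /= !in_itv /= => uW /andP[h1 h2].
by apply: uW; apply/andP; split; lra.
Qed.

Let mLIE k : measurable_fun `[0%R, T]%classic (fun t => LIE k tau x t).
Proof.
have mF : measurable_fun `[0%R, T]%classic (fun t => k^-1 * ln (fine (fubini_F mu (G k) t))).
  have mln : measurable_fun setT (@ln R) := @measurable_ln R.
  have mFF := measurable_fun_fubini_tonelli_F (m2 := mu) _ (mG k) (G0 k).
  have mfine : measurable_fun setT (fun t => fine (fubini_F mu (G k) t)).
    by apply: (measurableT_comp (@fine_measurable R _ measurableT) mFF).
  apply: measurable_funM => //.
  apply: measurable_funTS.
  exact: (measurableT_comp mln mfine).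
apply: eq_measurable_fun mF => t; rewrite inE => /= t01.
by rewrite /LIE -/(J k t) JF //; move: t01; rewrite /= in_itv.
Qed.

Let me_meas : measurable_fun `[0%R, T]%classic e.
Proof.
apply: (@measurable_fun_cvg _ _ _ _ (fun n t => LIE n%:R tau x t)) => //.
move=> t; rewrite /= in_itv /= => t01.
by move/cvg_pinftyP: (cvg_pt t01) => /(_ _ cvgr_idn).
Qed.

Lemma final_seq (p : R) (hp : 1 <= p) (u : R^nat) : u n @[n --> \oo] --> +oo ->
  (\int[mu]_(t in `[0%R, T]%classic)
      ((`| fine (ess_sup_on `[0%R, tau]%classic (seg x t)) - LIE (u n) tau x t |)
         `^ p)%:E)%E @[n --> \oo] --> 0%E.
Proof.
move=> hu.
pose v n := Num.max (u n) 1.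
have hv : v n @[n --> \oo] --> +oo.
  apply/cvgryPge => B; move/cvgryPge: hu => /(_ B); apply: filterS => n h.
  by rewrite /v le_max h.
have ev : \forall n \near \oo, v n = u n.
  by move/cvgryPge: hu => /(_ 1); apply: filterS => n h; rewrite /v max_l.
have v0 n : 0 < v n by rewrite /v lt_max ltr01 orbT.
have v1 n : 1 <= v n by rewrite /v le_max lexx orbT.
have Mge0 : 0 <= M.
  have t01 : (0:R) <= 0 <= T by apply/andP; split => //; exact: ltW.
  by have /andP[h1 h2] := e_bnd t01; move: h1 h2; lra.
pose C := 2 * M + `|ln tau|.
have C0 : 0 <= C by rewrite /C; have := normr_ge0 (ln tau); lra.
have bnd n t : 0 <= t <= T -> `|e t - LIE (v n) tau x t| <= C.
  move=> t01; have h1 := LIE_up (v n) t01 (v0 n); have h2 := LIE_lo (v n) t01 (v0 n).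
  have /andP[he1 he2] := e_bnd t01.
  have w0 : 0 < (v n)^-1 by rewrite invr_gt0.
  have w1 : (v n)^-1 <= 1 by rewrite invf_le1.
  have n1 : ln tau <= `|ln tau| by exact: ler_norm.
  have n2 : - ln tau <= `|ln tau| by rewrite -normrN; exact: ler_norm.
  have b1 : (v n)^-1 * ln tau <= `|ln tau| by nra.
  have b2 : - `|ln tau| <= (v n)^-1 * ln tau by nra.
  rewrite ler_norml; apply/andP; split; move: h1 h2 b1 b2 he1 he2 Mge0; rewrite /C; lra.
have mF n : measurable_fun `[0%R, T]%classic
    (fun t => ((`| e t - LIE (v n) tau x t |) `^ p)%:E).
  apply/measurable_EFinP.
  apply: (measurableT_comp (measurable_powR p)).
  apply: (measurableT_comp (@normr_measurable R setT)).
  by apply: measurable_funB; [exact: me_meas | exact: mLIE].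
have ff t : `[0%R, T]%classic t ->
    (fun n => ((`| e t - LIE (v n) tau x t |) `^ p)%:E) n @[n --> \oo] --> (cst 0%E) t.
  rewrite /= in_itv /= => t01.
  apply: cvg_powR_abs => //.
  by move/cvg_pinftyP: (cvg_pt t01) => /(_ _ hv).
have ig : mu.-integrable `[0%R, T]%classic (cst (C `^ p)%:E).
  apply/integrableP; split; first exact: measurable_cst.
  rewrite (eq_integral (cst `|(C `^ p)%:E|%E)) //.
  have -> : (\int[mu]_(x in `[0%R, T]%classic) (cst `|(C `^ p)%:E|%E x))%E = (`|C `^ p| * T)%:E.
    rewrite integral_cst; last exact: measurable_itv.
    rewrite EFinM; congr (_ * _)%E.
    by have h := mu_cc _ _ (ltW hT); rewrite subr0 in h; exact: h.
  exact: ltry.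
have absfg n t : `[0%R, T]%classic t ->
    (`|((`| e t - LIE (v n) tau x t |) `^ p)%:E| <= (cst (C `^ p)%:E) t)%E.
  rewrite /= in_itv /= => t01.
  rewrite lee_fin ger0_norm ?powR_ge0 //.
  apply: ge0_ler_powR; rewrite ?nnegrE //; first by move: hp; lra.
  exact: bnd.
have fing : forall t, `[0%R, T]%classic t -> (cst (C `^ p)%:E t) \is a fin_num by [].
have key := dominated_cvg (mu := mu) (measurable_itv `[0%R, T]) mF ff fing ig absfg.
rewrite integral0 in key.
apply: cvg_trans _ key; apply: near_eq_cvg.
by move: ev; apply: filterS => n h; rewrite /= h.
Qed.

End main.

Theorem lemma4p4 (R : realType) (T tau : R) (x : R -> R)
  (hT : 0 < T) (htau : 0 < tau)
  (xmeas : measurable_fun `]- tau, T[%classic x)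
  (xbnd : exists M : R,
     {ae (@lebesgue_measure R), forall s, `]- tau, T[%classic s -> `|x s| <= M})
  (p : R) (hp : 1 <= p) :
  (\int[@lebesgue_measure R]_(t in `[0%R, T]%classic)
      ((`| fine (ess_sup_on `[0%R, tau]%classic (seg x t)) - LIE k tau x t |)
         `^ p)%R%:E)%E
    @[k --> +oo] --> 0%E.
Proof.
case: xbnd => M hM.
apply/cvge_pinftyP => u hu.
exact: (@final_seq R T tau x hT htau xmeas M hM p hp u hu).
Qed.
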